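(* Let $R$ be a finite commutative Frobenius ring of characteristic $2$ and let $B$ and $C$ be $n\times n$ matrices over $R$. Let $M$ be the $2n\times 4n$ matrix $$M=\left(\, I_{2n} \;\middle|\; \begin{matrix} B & C\\ C & B\end{matrix}\,\right).$$ Then the code generated by $M$ (the $R$-submodule of $R^{4n}$ spanned by the rows of $M$) is self-dual if and only if $(B+C)(B+C)^T=I_n$ and $BC^T=CB^T$.
   Context: A linear code of length $N$ over $R$ is an $R$-submodule $\mathcal{C}\subseteq R^N$; its dual is $\mathcal{C}^\perp=\{x\in R^N : \langle x,c\rangle=0 \text{ for all } c\in\mathcal{C}\}$ with respect to the Euclidean inner product $\langle x,y\rangle=\sum_i x_iy_i$, and $\mathcal{C}$ is self-dual if $\mathcal{C}=\mathcal{C}^\perp$. *)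

(* Defs.v *)
From mathcomp Require Import all_boot all_order all_algebra all_field.
Set Implicit Arguments. Unset Strict Implicit. Unset Printing Implicit Defensive.
Import GRing.Theory Num.Theory.
Local Open Scope ring_scope.

(* A generating character of a finite ring R (Wood): an additive character
   chi : (R,+) -> C^* whose kernel contains no nonzero ideal. *)
Definition generating_character (R : finComNzRingType) (chi : R -> algC) : Prop :=
  chi 0 = 1 /\ (forall a b : R, chi (a + b) = chi a * chi b) /\
  (forall a : R, a != 0 -> exists r : R, chi (r * a) != 1).

(* A finite (commutative) ring is Frobenius iff it admits a generating character. *)
Definition frobenius_ring (R : finComNzRingType) : Prop :=
  exists chi : R -> algC, generating_character chi.

Definition gen_code (R : finComNzRingType) (k N : nat) (G : 'M[R]_(k, N))
  (x : 'rV[R]_N) : Prop := exists u : 'rV[R]_k, x = u *m G.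

Definition dual_code (R : finComNzRingType) (N : nat) (C : 'rV[R]_N -> Prop)
  (x : 'rV[R]_N) : Prop := forall c, C c -> \sum_(i < N) x 0 i * c 0 i = 0.

Definition self_dual (R : finComNzRingType) (N : nat) (C : 'rV[R]_N -> Prop) : Prop :=
  forall x, C x <-> dual_code C x.

(* Main.v *)
Require Import Defs.
From mathcomp Require Import all_boot all_order all_algebra all_field.
Import GRing.Theory.
Local Open Scope ring_scope.

Lemma dotE (R : finComNzRingType) N (x c : 'rV[R]_N) :
  \sum_(i < N) x 0 i * c 0 i = (x *m c^T) 0 0.
Proof. by rewrite mxE; apply: eq_bigr => i _; rewrite mxE. Qed.

Lemma sd_iff (R : finComNzRingType) m (A : 'M[R]_m) :
  self_dual (gen_code (row_mx 1%:M A)) <-> A *m A^T = - 1%:M.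
Proof.
set G := row_mx 1%:M A.
have GG : G *m G^T = 1%:M + A *m A^T.
  by rewrite /G tr_row_mx mul_row_col trmx1 mulmx1.
split.
- move=> sd.
  have H0 : G *m G^T = 0.
    apply/matrixP => i j.
    have Ci : gen_code G (row i G) by exists (delta_mx 0 i); rewrite rowE.
    have Cj : gen_code G (row j G) by exists (delta_mx 0 j); rewrite rowE.
    have := (proj1 (sd _) Ci) _ Cj.
    move=> H; rewrite mxE [in RHS]mxE -[in RHS]H; apply: eq_bigr => k _; rewrite !mxE //.
  by apply/eqP; rewrite -subr_eq0 opprK addrC -GG H0.
- move=> HA.
  have H0 : G *m G^T = 0 by rewrite GG HA subrr.
  move=> x; split.
  + move=> [u ->] c [v ->].
    by rewrite dotE trmx_mul !mulmxA -(mulmxA u) H0 mulmx0 mul0mx mxE.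
  + move=> dx.
    have xG : x *m G^T = 0.
      apply/matrixP => i j; rewrite [in RHS]mxE (ord1 i).
      have Cj : gen_code G (row j G) by exists (delta_mx 0 j); rewrite rowE.
      rewrite -(dx _ Cj) mxE; apply: eq_bigr => k _; rewrite !mxE //.
    have AtA : A^T *m A = - 1%:M.
      have h : A *m (- A^T) = 1%:M by rewrite mulmxN HA opprK.
      have := mulmx1C h. by rewrite mulNmx => /eqP; rewrite eqr_oppLR => /eqP.
    rewrite -(hsubmxK x) in xG *.
    move: xG; rewrite /G tr_row_mx mul_row_col trmx1 mulmx1 => /eqP.
    rewrite addr_eq0 => /eqP e.
    exists (lsubmx x); rewrite mul_mx_row mulmx1 e mulNmx -mulmxA AtA mulmxN mulmx1 ?opprK //.
Qed.

Theorem mainTheorem1 (R : finComNzRingType) (n : nat) (B C : 'M[R]_n) :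
  frobenius_ring R -> (2%:R : R) = 0 ->
  self_dual (gen_code (row_mx (1%:M : 'M[R]_(n + n)) (block_mx B C C B)))
  <-> ((B + C) *m (B + C)^T = 1%:M /\ B *m C^T = C *m B^T).
Proof.
move=> _ h2.
have negE : forall p q (M : 'M[R]_(p, q)), - M = M.
  move=> p q M; apply/matrixP => i j; rewrite mxE; apply/eqP.
  by rewrite eq_sym -subr_eq0 opprK -mulr2n -mulr_natr h2 mulr0.
have dbl : forall p q (M : 'M[R]_(p, q)), M + M = 0.
  by move=> p q M; rewrite -{1}(negE _ _ M) addNr.
have E := @sd_iff R _ (block_mx B C C B).
suff S : (block_mx B C C B *m (block_mx B C C B)^T = - 1%:M) <-> ((B + C) *m (B + C)^T = 1%:M /\ B *m C^T = C *m B^T).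
  by split => [/E/S | /S/E].
rewrite negE tr_block_mx mulmx_block scalar_mx_block.
split.
- move/eq_block_mx => [h1 h2' _ _].
  have e : B *m C^T = C *m B^T.
    by apply/eqP; rewrite -subr_eq0 negE h2'.
  split=> //.
  rewrite linearD /= mulmxDl !mulmxDr -h1 e.
  by rewrite (addrC (C *m B^T) (C *m C^T)) addrACA dbl addr0.
- move=> [h1 e].
  move: h1; rewrite linearD /= mulmxDl !mulmxDr e => h1.
  have hb : B *m B^T + C *m C^T = 1%:M.
    by rewrite -h1 (addrC (C *m B^T) (C *m C^T)) addrACA dbl addr0.
  by rewrite hb dbl addrC hb.
Qed.
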